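(* Let $G$ be a graph of order $n$ with no isolated vertices. Then $\gamma_{\rm gr}^t(G)=n$ if and only if there is an integer $k$ with $n=2k$ such that the vertices of $G$ can be labeled $x_1,\ldots,x_k,y_1,\ldots,y_k$ so that: (i) $x_i$ is adjacent to $y_i$ for each $i\in\{1,\ldots,k\}$; (ii) $\{x_1,\ldots,x_k\}$ is an independent set; and (iii) whenever $y_j$ is adjacent to $x_i$, we have $i \ge j$.
   Context: All graphs are finite, simple, without isolated vertices. $N(v)$ denotes the open neighborhood of $v$. A sequence $S=(v_1,\ldots,v_k)$ of distinct vertices of $G$ is a legal (open neighborhood) sequence if $N(v_i)\setminus \bigcup_{j=1}^{i-1} N(v_j)\neq\emptyset$ for every $i\in\{2,\ldots,k\}$. It is a total dominating sequence if moreover the set $\{v_1,\ldots,v_k\}$ is a total dominating set of $G$ (every vertex has a neighbor in it). The Grundy total domination number $\gamma_{\rm gr}^t(G)$ is the maximum length of a total dominating sequence of $G$. *)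

(* Defs.v *)
From mathcomp Require Import all_boot.
Set Implicit Arguments. Unset Strict Implicit. Unset Printing Implicit Defensive.

Definition simple_graph (T : finType) (e : rel T) : Prop :=
  symmetric e /\ irreflexive e.

Definition no_isolated (T : finType) (e : rel T) : Prop :=
  forall v : T, exists u, e v u.

Definition nbhd (T : finType) (e : rel T) (v : T) : {set T} := [set u | e v u].

Definition legal_seq (T : finType) (e : rel T) (s : seq T) : Prop :=
  uniq s /\
  forall (p q : seq T) (v : T), s = p ++ v :: q -> p != [::] ->
    ~~ (nbhd e v \subset \bigcup_(w <- p) nbhd e w).

Definition total_dominating (T : finType) (e : rel T) (S : pred T) : Prop :=
  forall v : T, exists2 u, u \in S & e v u.

Definition total_dominating_seq (T : finType) (e : rel T) (s : seq T) : Prop :=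
  legal_seq e s /\ total_dominating e (mem s).

(* g is the Grundy total domination number: the maximum length of a total
   dominating sequence (such sequences exist when there are no isolated vertices). *)
Definition is_grundy_total (T : finType) (e : rel T) (g : nat) : Prop :=
  (exists s, total_dominating_seq e s /\ size s = g) /\
  (forall s, total_dominating_seq e s -> size s <= g).

(* Main.v *)
Require Import Defs.
From mathcomp Require Import all_boot zify.
Set Implicit Arguments. Unset Strict Implicit. Unset Printing Implicit Defensive.

Lemma not_sub_intro (T : finType) (e : rel T) (p : seq T) v u :
  e v u -> (forall w, w \in p -> ~~ e w u) ->
  ~~ (nbhd e v \subset \bigcup_(w <- p) nbhd e w).
Proof.
move=> evu H; apply/negP => /subsetP Hs.
have := Hs u; rewrite inE => /(_ evu); rewrite bigcup_seq => /bigcupP [w wp].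
by rewrite inE (negbTE (H w wp)).
Qed.

Lemma not_sub_elim (T : finType) (e : rel T) (p : seq T) v :
  ~~ (nbhd e v \subset \bigcup_(w <- p) nbhd e w) ->
  exists u, e v u /\ (forall w, w \in p -> ~~ e w u).
Proof.
case/subsetPn => u; rewrite inE => evu Hn; exists u; split => // w wp.
apply/negP => ewu; move: Hn; rewrite bigcup_seq; apply/negP/negPn.
by apply/bigcupP; exists w => //; rewrite inE.
Qed.

Lemma index_prefix (T : eqType) (s p q : seq T) v w :
  uniq s -> s = p ++ v :: q -> w \in p -> index w s < index v s.
Proof.
move=> us sE wp; rewrite sE !index_cat wp.
have vp : v \notin p by move: us; rewrite sE cat_uniq /= => /and3P [_ /norP [] ].
by rewrite (negbTE vp) /= eqxx addn0 index_mem.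
Qed.

Lemma all_in (T : finType) (s : seq T) : uniq s -> size s = #|T| -> forall u, u \in s.
Proof.
move=> us ss u.
have : mem s =i predT.
  apply/subset_cardP; last by apply/subsetP.
  by rewrite (card_uniqP us) ss.
by move=> ->.
Qed.

Lemma backward (T : finType) (e : rel T) :
  simple_graph e -> no_isolated e ->
   (exists (k : nat) (x y : 'I_k -> T),
     #|T| = (2 * k)%N /\
     injective x /\ injective y /\
     (forall i j, x i != y j) /\
     (forall v : T, exists i, v = x i \/ v = y i) /\
     (forall i, e (x i) (y i)) /\
     (forall i j, ~~ e (x i) (x j)) /\
     (forall i j : 'I_k, e (y j) (x i) -> (j <= i)%N)) ->
  is_grundy_total e #|T|.
Proof.
move=> [esym eirr] noiso [k [x [y [cardT [xinj [yinj [xy [cov [exy [xind xy3]]]]]]]]]].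
set xs := map x (enum 'I_k); set ys := map y (enum 'I_k).
set s := xs ++ rev ys.
have sxs : size xs = k by rewrite size_map size_enum_ord.
have sys : size ys = k by rewrite size_map size_enum_ord.
have ss : size s = #|T| by rewrite size_cat size_rev sxs sys cardT; lia.
have uxs : uniq xs by rewrite map_inj_uniq ?enum_uniq.
have uys : uniq ys by rewrite map_inj_uniq ?enum_uniq.
have us : uniq s.
  rewrite cat_uniq uxs rev_uniq uys /= andbT; apply/hasPn => z; rewrite mem_rev.
  case/mapP => j _ ->; apply/mapP => [[i _ /eqP]]; by rewrite eq_sym (negbTE (xy _ _)).
have PX j : index (x j) s = j.
  by rewrite index_cat /xs mem_map // mem_enum inE index_map // index_enum_ord.
have PY j : index (y j) s = k + (k - j.+1).
  have nx : (y j \in xs) = false.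
    by apply/negbTE/mapP => [[i _ /eqP]]; rewrite eq_sym (negbTE (xy _ _)).
  rewrite index_cat nx sxs; congr (_ + _).
  have jk := ltn_ord j.
  have -> : y j = nth (y j) (rev ys) (k - j.+1).
    rewrite nth_rev sys; last lia.
    have -> : k - (k - j.+1).+1 = j by lia.
    by rewrite (nth_map j) ?size_enum_ord // nth_ord_enum.
  by rewrite index_uniq ?rev_uniq // size_rev sys; lia.
have covs u : u \in s.
  have [i [->|->]] := cov u; rewrite mem_cat ?mem_rev.
    by rewrite map_f ?mem_enum.
  by rewrite orbC map_f ?mem_enum.
split.
  exists s; split => //; split; last first.
    by move=> v; have [u evu] := noiso v; exists u.
  split => // p q v sE _.
  have [i [vE|vE]] := cov v; subst v.
    apply: (not_sub_intro (u := y i)) => // w wp.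
    have := index_prefix us sE wp; rewrite PX.
    have [j [->|->]] := cov w; rewrite ?PX ?PY => lt; last by have := ltn_ord i; lia.
    apply/negP => H; rewrite esym in H; have := xy3 _ _ H; lia.
  apply: (not_sub_intro (u := x i)); first by rewrite esym.
  move=> w wp; have := index_prefix us sE wp; rewrite PY.
  have [j [->|->]] := cov w; rewrite ?PX ?PY => lt; first exact: xind.
  have ik := ltn_ord i; have jk := ltn_ord j.
  apply/negP => H; have := xy3 _ _ H; lia.
by move=> t [[ut _] _]; rewrite -(card_uniqP ut) max_card.
Qed.

Lemma invol (T : finType) (e : rel T) (s : seq T) (u0 : T) :
  simple_graph e -> no_isolated e -> total_dominating_seq e s -> size s = #|T| ->
  let pos u := index u s in
  exists h : T -> T,
    (forall u, h (h u) = u) /\ (forall u, e u (h u)) /\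
    (forall u b, e u b -> pos (h u) <= pos b) /\ (forall u v, pos u = pos v -> u = v).
Proof.
move=> [esym eirr] noiso [[us Hleg] _] ss pos.
have allin := all_in us ss.

pose d u := find (e u) s.
pose h u := nth u s (d u).
have hasu u : has (e u) s.
  by have [b eub] := noiso u; apply/hasP; exists b => //; exact: allin.
have dlt u : d u < #|T| by rewrite -ss -has_find.
have ehu u : e u (h u) by apply: nth_find.
have hpos u : pos (h u) = d u by rewrite /pos /h index_uniq // ss.
have posinj u v : pos u = pos v -> u = v.
  by move=> E; rewrite -(nth_index u (allin u)) /pos -/(pos u) E /pos nth_index.
have dle u b : e u b -> d u <= pos b.
  move=> eub; rewrite leqNgt; apply/negP => lt.
  have := before_find b lt; rewrite nth_index ?allin // => H.
  by rewrite H in eub.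
have dsurj i : i < #|T| -> exists u, d u = i.
  move=> lti; set v := nth u0 s i.
  have vp : pos v = i by rewrite /pos /v index_uniq // ss.
  have [u [evu Hu]] : exists u, e v u /\ (forall w, w \in take i s -> ~~ e w u).
    case: (posnP i) => [i0|ip].
      have [u evu] := noiso v; exists u; split => // w; by rewrite i0 take0.
    have sE : s = take i s ++ v :: drop i.+1 s by rewrite -drop_nth ?ss // cat_take_drop.
    apply: not_sub_elim; apply: (Hleg _ _ _ sE).
    by rewrite -size_eq0 size_take ss lti; lia.
  exists u; apply/eqP; rewrite eqn_leq; apply/andP; split.
    by rewrite -vp; apply: dle; rewrite esym.
  rewrite leqNgt; apply/negP => lt.
  have : nth u s (d u) \in take i s.
    by rewrite -(nth_take u lt) mem_nth // size_take ss lti.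
  move/Hu; rewrite esym; by rewrite (nth_find u (hasu u)).
have dinj : injective d.
  pose D u : 'I_#|T| := Ordinal (dlt u).
  have ex i : exists u, D u == i by have [u du] := dsurj i (ltn_ord i); exists u; apply/eqP/val_inj.
  pose g i := xchoose (ex i).
  have Dg i : D (g i) = i by apply/eqP; exact: (xchooseP (ex i)).
  have ginj : injective g by apply: (can_inj Dg).
  have cle : #|T| <= #|'I_#|T| | by rewrite card_ord.
  have [g' gK g'K] := inj_card_bij ginj cle.
  move=> u v duv.
  have Du : D u = D v by apply: val_inj.
  by rewrite -(g'K u) -(g'K v) -{1}(Dg (g' u)) -(Dg (g' v)) g'K g'K Du.
have hinj : injective h by move=> u v huv; apply: dinj; rewrite -!hpos huv.
have key u : d (h u) <= pos u by apply: dle; rewrite esym.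
have sumE : \sum_u d (h u) = \sum_u pos u.
  have -> : \sum_u d (h u) = \sum_u d u by rewrite [RHS](reindex_inj hinj).
  rewrite (eq_bigr (fun u => pos (h u))) => [|u _]; last by rewrite hpos.
  by rewrite [RHS](reindex_inj hinj).
have eqd u : d (h u) = pos u.
  have : \sum_u (pos u - d (h u)) == 0 by rewrite sumnB // sumE subnn.
  rewrite sum_nat_eq0 => /forallP /(_ u) /=; rewrite subn_eq0 => H.
  by apply/eqP; rewrite eqn_leq key.
exists h; split; last split => //; last split => //.
  by move=> u; rewrite /h eqd /pos nth_index.
by move=> u b eub; rewrite hpos; exact: dle.
Qed.
Unset Implicit Arguments.

Theorem mainTheorem5 (T : finType) (e : rel T) :
  simple_graph e -> no_isolated e ->
  (is_grundy_total e #|T| <->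
   exists (k : nat) (x y : 'I_k -> T),
     #|T| = (2 * k)%N /\
     injective x /\ injective y /\
     (forall i j, x i != y j) /\
     (forall v : T, exists i, v = x i \/ v = y i) /\
     (forall i, e (x i) (y i)) /\
     (forall i j, ~~ e (x i) (x j)) /\
     (forall i j : 'I_k, e (y j) (x i) -> (j <= i)%N)).
Proof.
move=> sg noiso; split; last exact: backward.
move=> [[s [tds ss]] _].
case: (posnP #|T|) => [T0|/card_gt0P [u0 _]]; last first.
  have [esym eirr] := sg.
  have [h [hh [ehu [earl posinj]]]] := invol u0 sg noiso tds ss.
  set pos := index^~ s in earl posinj.
  have hinj : injective h by apply: (can_inj hh).
  pose Y := [pred u | pos (h u) < pos u].
  have hne u : pos (h u) != pos u.
    by apply/negP => /eqP /posinj E; move: (ehu u); rewrite E eirr.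
  have nY u : (u \notin Y) = (h u \in Y).
    rewrite !inE hh -leqNgt leq_eqVlt eq_sym.
    by rewrite (negbTE (hne u)).
  have cardY : #|T| = 2 * #|Y|.
    rewrite -(cardC Y).
    have -> : #|[predC Y]| = #|[set h u | u in Y]|.
      apply: eq_card => u; rewrite inE; apply/idP/imsetP.
        by rewrite nY => hY; exists (h u) => //; rewrite hh.
      by move=> [v vY ->]; rewrite nY hh.
    by rewrite card_imset // addnn mul2n.
  set k := #|Y|.
  pose r := fun a b => pos b <= pos a.
  pose ys := sort r (enum Y).
  have sys : size ys = k by rewrite size_sort -cardE.
  have uys : uniq ys by rewrite sort_uniq enum_uniq.
  have mys u : (u \in ys) = (u \in Y) by rewrite mem_sort mem_enum.
  have rtot : total r by move=> a b; rewrite /r leq_total.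
  have srt : sorted r ys by apply: sort_sorted.
  pose y (i : 'I_k) := nth u0 ys i.
  pose x i := h (y i).
  have yik (i : 'I_k) : (i < size ys) by rewrite sys.
  have yY i : y i \in Y by rewrite -mys mem_nth.
  have yinj : injective y.
    by move=> i j /eqP; rewrite nth_uniq // => /eqP /val_inj.
  exists k, x, y; split => //; split; first by move=> i j /hinj/yinj.
  split => //; split.
    by move=> i j; apply/eqP => E; have := yY i; rewrite -[_ \in _]negbK nY -/(x i) E yY.
  split.
    move=> v; case vY: (v \in Y).
      have vi : index v ys < k by rewrite -sys index_mem mys.
      by exists (Ordinal vi); right; rewrite /y /= nth_index // mys.
    have : h v \in ys by rewrite mys -nY vY.
    rewrite -index_mem sys => vi; exists (Ordinal vi); left.
    by rewrite /x /y /= nth_index ?hh // mys -nY vY.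
  split; first by move=> i; rewrite /x esym.
  split.
    move=> i j; apply/negP => E.
    have a1 := earl _ _ E; rewrite esym in E; have a2 := earl _ _ E.
    have := yY i; have := yY j; rewrite !inE /pos; rewrite /x !hh in a1 a2; rewrite /x in a1 a2; lia.
  move=> i j E; rewrite esym in E; have := earl _ _ E; rewrite /x hh => le.
  rewrite leqNgt; apply/negP => lt.
  have rtr : transitive r by move=> a b c; rewrite /r => H1 H2; exact: leq_trans H2 H1.
  have rrf : reflexive r by move=> a; exact: leqnn.
  have := sorted_leq_nth rtr rrf u0 srt i j (yik i) (yik j) (ltnW lt).
  rewrite /r => le2.
  have : y i = y j by apply: posinj; apply/eqP; rewrite eqn_leq le le2.
  by move/yinj => ij; rewrite ij ltnn in lt.
exists 0.
have f0 : 'I_0 -> T by case.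
have no0 (i : 'I_0) : False by case: i.
exists f0, f0; split; first by rewrite T0.
split; first by move=> i; case: (no0 i).
split; first by move=> i; case: (no0 i).
split; first by move=> i; case: (no0 i).
split; first by move=> v; have := card0_eq T0 v.
split; first by move=> i; case: (no0 i).
split; by move=> i; case: (no0 i).
Qed.
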